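(* Let $\operatorname{BTTB}_{n,k}(\mathbb{C})=\operatorname{Toep}_n(\mathbb{C})\circledast\operatorname{Toep}_k(\mathbb{C})$ be the space of $nk\times nk$ block-Toeplitz matrices with $n\times n$ blocks, each block a $k\times k$ Toeplitz matrix. The structure tensor of the matrix-vector product $\operatorname{BTTB}_{n,k}(\mathbb{C})\times\mathbb{C}^{nk}\to\mathbb{C}^{nk}$ has rank $(2k-1)(2n-1)$.
   Context: $\operatorname{Toep}_m(\mathbb{C})$ is the space of $m\times m$ Toeplitz matrices ($(i,j)$ entry depending only on $j-i$); $\circledast$ denotes the span of Kronecker products. Structure tensor of a bilinear map $\beta:U\times V\to W$: the unique $\mu_\beta\in U^*\otimes V^*\otimes W$ with $\beta(u,v)=\mu_\beta(u,v,\cdot)$. Rank: least number of decomposable tensors summing to the tensor. *)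

(* Defs.v *)
From HB Require Import structures.
From mathcomp Require Import all_boot all_order all_algebra all_field.
Set Implicit Arguments. Unset Strict Implicit. Unset Printing Implicit Defensive.
Import GRing.Theory.
Local Open Scope ring_scope.

Definition tensor_rank_le (F : fieldType) (I J K : finType)
  (t : I -> J -> K -> F) (r : nat) : Prop :=
  exists (u : 'I_r -> I -> F) (v : 'I_r -> J -> F) (w : 'I_r -> K -> F),
    forall i j l, t i j l = \sum_(s < r) u s i * v s j * w s l.

Definition tensor_rank_is (F : fieldType) (I J K : finType)
  (t : I -> J -> K -> F) (r : nat) : Prop :=
  tensor_rank_le t r /\ forall r', tensor_rank_le t r' -> (r <= r')%N.

(* Basis of Toep_n: for a : 'I_(2n-1) (standing for the diagonal offset
   d = a - (n-1)), the n x n matrix with 1 at (i,j) iff j - i = d. *)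
Definition toep_basis (F : fieldType) (n : nat) (a : 'I_(2 * n - 1)) : 'M[F]_n :=
  \matrix_(i < n, j < n) ((j + n.-1 - i)%N == a)%:R.

Definition toeplitz (F : fieldType) (n : nat) (c : 'I_(2 * n - 1) -> F) : 'M[F]_n :=
  \sum_(a < 2 * n - 1) c a *: @toep_basis F n a.

(* Kronecker product of A : n x n and B : k x k, as an (nk) x (nk) matrix
   with rows/columns indexed by 'I_n * 'I_k (pairs (i,p) <-> row i*k+p). *)
Definition kron (F : fieldType) (n k : nat) (A : 'M[F]_n) (B : 'M[F]_k)
  : 'I_n * 'I_k -> 'I_n * 'I_k -> F :=
  fun x y => A x.1 y.1 * B x.2 y.2.

(* Coordinates on BTTB_{n,k} = Toep_n circledast Toep_k (span of Kronecker products):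
   the basis kron (toep_basis a) (toep_basis b). *)
Definition bttb_index (n k : nat) : finType := ('I_(2 * n - 1) * 'I_(2 * k - 1))%type.

Definition bttb (F : fieldType) (n k : nat) (c : bttb_index n k -> F)
  : 'I_n * 'I_k -> 'I_n * 'I_k -> F :=
  fun x y => \sum_(ab : bttb_index n k)
               c ab * @kron F n k (@toep_basis F n ab.1) (@toep_basis F k ab.2) x y.

Definition bttb_mv (F : fieldType) (n k : nat) (c : bttb_index n k -> F)
  (v : 'I_n * 'I_k -> F) : 'I_n * 'I_k -> F :=
  fun x => \sum_(y : 'I_n * 'I_k) bttb c x y * v y.

(* Its structure tensor in U^* ⊗ V^* ⊗ W, in coordinates w.r.t. the basis
   above of U = BTTB_{n,k} and the standard bases of V = W = F^{nk}:
   mu(e_ab, e_y, dual(e_x)) = (beta(e_ab, e_y))_x. *)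
Definition bttb_struct (F : fieldType) (n k : nat)
  : bttb_index n k -> ('I_n * 'I_k)%type -> ('I_n * 'I_k)%type -> F :=
  fun ab y x => @bttb_mv F n k (fun ab' => (ab' == ab)%:R) (fun y' => (y' == y)%:R) x.

(* Main.v *)
Require Import Defs.
From HB Require Import structures.
From mathcomp Require Import all_boot all_order all_algebra all_field.
From mathcomp Require Import zify ring.
Import GRing.Theory Num.Theory.
Local Open Scope ring_scope.

Lemma charsum (F : fieldType) m (z : F) (hz : m.-primitive_root z) e :
  \sum_(s < m) z ^+ (s * e) = if (m %| e)%N then m%:R else 0.
Proof.
have -> : \sum_(s < m) z ^+ (s * e) = \sum_(s < m) (z ^+ e) ^+ s.
  by apply: eq_bigr => s _; rewrite mulnC exprM.
case: ifP => hd.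
  have -> : z ^+ e = 1.
    by case/dvdnP: hd => q ->; rewrite mulnC exprM (prim_expr_order hz) expr1n.
  under eq_bigr => s _ do rewrite expr1n.
  by rewrite sumr_const card_ord.
have hne : z ^+ e - 1 != 0 by rewrite subr_eq0 -(prim_order_dvd hz) hd.
have : (z ^+ e - 1) * \sum_(s < m) (z ^+ e) ^+ s == 0.
  by rewrite -subrX1 -exprM mulnC exprM (prim_expr_order hz) expr1n subrr.
by rewrite mulf_eq0 (negbTE hne) => /eqP.
Qed.

Lemma dvd_cond n' (i j a : nat) : (i < n'.+1)%N -> (j < n'.+1)%N -> (a < 2 * n'.+1 - 1)%N ->
  ((2 * n'.+1 - 1) %| (2 * n'.+1 - 1 - a + n' + j + (2 * n'.+1 - 1 - i)))%N = (j + n' - i == a)%N.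
Proof.
move=> hi hj ha.
apply/idP/eqP => [/dvdnP [q hq]|h].
  have hm : (0 < 2 * n'.+1 - 1)%N by lia.
  have h1 : (q * (2 * n'.+1 - 1) < 3 * (2 * n'.+1 - 1))%N by lia.
  have h2 : (1 * (2 * n'.+1 - 1) < q * (2 * n'.+1 - 1))%N by lia.
  rewrite ltn_pmul2r // in h1; rewrite ltn_pmul2r // in h2.
  have hq2 : q = 2%N by lia.
  rewrite hq2 in hq; lia.
by apply/dvdnP; exists 2%N; lia.
Qed.

Lemma toep1 n' (z : algC) (hz : (2 * n'.+1 - 1).-primitive_root z)
  (i j : 'I_n'.+1) (a : 'I_(2*n'.+1-1)) :
  ((j + n' - i)%N == a)%:R = \sum_(s < 2*n'.+1-1)
    (z ^+ (s * ((2*n'.+1-1 - a) + n')) / (2*n'.+1-1)%:R) * z ^+ (s * j)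
      * z ^+ (s * (2*n'.+1-1 - i)).
Proof.
set m := (2 * n'.+1 - 1)%N.
have -> : \sum_(s < m) (z ^+ (s * ((m - a) + n')) / m%:R) * z ^+ (s * j)
      * z ^+ (s * (m - i)) = (\sum_(s < m) z ^+ (s * ((m - a) + n' + j + (m - i)))) / m%:R.
  rewrite mulr_suml; apply: eq_bigr => s _.
  by rewrite !mulnDr !exprD; ring.
rewrite charsum // dvd_cond //; case: eqP => _ /=; last by rewrite mul0r.
by rewrite divff // pnatr_eq0 /m; lia.
Qed.

Lemma struct_eq (F : fieldType) n k ab y x :
  @bttb_struct F n k ab y x =
  ((y.1 + n.-1 - x.1)%N == ab.1)%:R * ((y.2 + k.-1 - x.2)%N == ab.2)%:R.
Proof.
rewrite /bttb_struct /bttb_mv (bigD1 y) //= big1 => [|y' /negbTE hy].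
  rewrite addr0 eqxx mulr1 /bttb (bigD1 ab) //= big1 => [|ab' /negbTE hab].
    by rewrite addr0 eqxx mul1r /kron !mxE.
  by rewrite hab mul0r.
by rewrite hy mulr0.
Qed.

Lemma rank_le_fin (F : fieldType) (I J K S : finType) (t : I -> J -> K -> F)
  u v w : (forall i j l, t i j l = \sum_(s : S) u s i * v s j * w s l) ->
  tensor_rank_le t #|S|.
Proof.
move=> H; exists (fun s => u (enum_val s)), (fun s => v (enum_val s)),
  (fun s => w (enum_val s)) => i j l.
by rewrite H (big_enum_val (fun s => u s i * v s j * w s l)).
Qed.

Definition wj n' (a : nat) : 'I_n'.+1 := inord (a - n').
Definition wi n' (a : nat) : 'I_n'.+1 := inord (n' - a).

Lemma wji n' (a : 'I_(2 * n'.+1 - 1)) : (wj n' a + n' - wi n' a)%N = a.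
Proof.
have ha := ltn_ord a.
rewrite /wj /wi !inordK; lia.
Qed.

Theorem mainTheorem14 (n k : nat) (hn : (0 < n)%N) (hk : (0 < k)%N) :
  tensor_rank_is (@bttb_struct algC n k) ((2 * k - 1) * (2 * n - 1))%N.
Proof.
case: n hn => [//|n'] _; case: k hk => [//|k'] _.
split.
  have [z1 hz1] := @C_prim_root_exists (2 * n'.+1 - 1)%N ltac:(lia).
  have [z2 hz2] := @C_prim_root_exists (2 * k'.+1 - 1)%N ltac:(lia).
  set m := (2 * n'.+1 - 1)%N in hz1 *; set p := (2 * k'.+1 - 1)%N in hz2 *.
  have := @rank_le_fin algC _ _ _ ('I_m * 'I_p)%type (@bttb_struct algC n'.+1 k'.+1)
    (fun sq ab => (z1 ^+ (sq.1 * ((m - ab.1) + n')) / m%:R) *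
                  (z2 ^+ (sq.2 * ((p - ab.2) + k')) / p%:R))
    (fun sq y => z1 ^+ (sq.1 * y.1) * z2 ^+ (sq.2 * y.2))
    (fun sq x => z1 ^+ (sq.1 * (m - x.1)) * z2 ^+ (sq.2 * (p - x.2))).
  rewrite card_prod !card_ord [(p * m)%N]mulnC; apply => ab y x.
  rewrite struct_eq /= (@toep1 n' z1 hz1) (@toep1 k' z2 hz2) big_distrlr.
  rewrite pair_bigA /=; apply: eq_bigr => sq _ /=.
  ring.
move=> r [u [v [w H]]].
pose N := #|bttb_index n'.+1 k'.+1|.
pose A : 'M[algC]_(N, r) := \matrix_(i, s) u s (enum_val i).
pose yw (ab : bttb_index n'.+1 k'.+1) := (wj n' ab.1, wj k' ab.2).
pose xw (ab : bttb_index n'.+1 k'.+1) := (wi n' ab.1, wi k' ab.2).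
pose B : 'M[algC]_(r, N) := \matrix_(s, j) (v s (yw (enum_val j)) * w s (xw (enum_val j))).
have hAB : A *m B = 1%:M.
  apply/matrixP => i j; rewrite !mxE.
  under eq_bigr => s _ do rewrite !mxE mulrA.
  rewrite -H struct_eq /= !wji.
  rewrite -natrM mulnb.
  have -> : ((enum_val j).1 == (enum_val i).1) && ((enum_val j).2 == (enum_val i).2)
     = (enum_val j == enum_val i) by case: (enum_val j) => ? ?; case: (enum_val i).
  by rewrite (inj_eq enum_val_inj) eq_sym.
have := mulmx_max_rank A B; rewrite hAB mxrank1 /N /bttb_index card_prod !card_ord mulnC.
done.
Qed.
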